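(* Let $\Gamma=(V,E)$ be a connected locally finite graph with root $o$, let $\lambda>1$, and let $(Z_n)$ be the $\lambda$-homesick random walk on $(\Gamma,o)$, assumed recurrent. Let $\rho_0=0$ and $\rho_k=\inf\{n>\rho_{k-1}:Z_n=o\}$. Then for every $0<c<1$ and every integer $k\ge\left(\frac{5(\lambda-1)}{\deg o}\right)^{1/c}$, \[\Pr\Big(|\mathrm{range}(Z_{\rho_k})|\le\frac N4\Big)\le e^{-N/8},\qquad\text{where } N=\min\Big\{\big|B_{\frac{c\log k}{\log\lambda}}\big|,\Big\lfloor\frac{\lambda-1}{\deg o}k^{1-c}\Big\rfloor\Big\}.\]
   Context: The $\lambda$-homesick random walk on $(\Gamma,o)$: $Z_0=o$; from a vertex $v$, letting $v_1,\dots,v_j$ be the neighbors with $\mathrm{dist}(o,v_i)=\mathrm{dist}(o,v)-1$ and $v'_1,\dots,v'_k$ the other neighbors, the walk moves to each $v_i$ with probability $\frac{\lambda}{\lambda j+k}$ and to each $v'_i$ with probability $\frac{1}{\lambda j+k}$. $B_r=\{v\in V:\mathrm{dist}(o,v)\le r\}$ for real $r\ge0$ (so $B_r=B_{\lfloor r\rfloor}$). $\mathrm{range}(Z_n)=\{Z_0,\dots,Z_n\}$. *)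

(* Defs.v *)
From HB Require Import structures.
From mathcomp Require Import all_boot all_order all_algebra.
From mathcomp Require Import all_classical all_reals all_analysis.
Set Implicit Arguments. Unset Strict Implicit. Unset Printing Implicit Defensive.
Import Order.TTheory GRing.Theory Num.Theory.
Local Open Scope ring_scope.

(* A locally finite graph on vertex type V is given by its neighbour lists
   [nbrs v] (a finite duplicate-free list of the neighbours of v). *)
Section Graph.
Variables (V : eqType) (nbrs : V -> seq V).

Definition simple_graph : Prop :=
  [/\ forall v w, (w \in nbrs v) = (v \in nbrs w),
      forall v, v \notin nbrs v &
      forall v, uniq (nbrs v)].

(* ball o n : list (with repetitions) of vertices at distance <= n from o *)
Fixpoint ball (o : V) (n : nat) : seq V :=
  match n with
  | 0 => [:: o]
  | n'.+1 => let b := ball o n' in b ++ flatten (map nbrs b)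
  end.

Definition connected_graph : Prop :=
  forall o v : V, exists n, v \in ball o n.

(* graph distance dist(o, v) (0 if v is unreachable, never the case for
   connected graphs) *)
Definition gdist (o v : V) : nat :=
  match pselect (exists n, v \in ball o n) with
  | left h => ex_minn h
  | right _ => 0%N
  end.

(* |B_r| for real r >= 0: B_r = B_{floor r} *)
Definition ball_card {R : realType} (o : V) (r : R) : nat :=
  size (undup (ball o (Num.truncn r))).

Variable R : realType.

Definition hs_prob (lam : R) (o v w : V) : R :=
  let down u := (gdist o u + 1 == gdist o v)%N in
  let j := count down (nbrs v) in
  let k := (size (nbrs v) - j)%N in
  let den := lam * j%:R + k%:R in
  if w \in nbrs v then (if down w then lam / den else 1 / den) else 0.

(* all walks of length n from v, listed as the sequence of visited vertices
   after v *)
Fixpoint walks (n : nat) (v : V) : seq (seq V) :=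
  match n with
  | 0 => [:: [::]]
  | n'.+1 => flatten [seq [seq w :: s | s <- walks n' w] | w <- nbrs v]
  end.

Fixpoint walk_weight (lam : R) (o v : V) (s : seq V) : R :=
  match s with
  | [::] => 1
  | w :: s' => hs_prob lam o v w * walk_weight lam o w s'
  end.

(* Probability that (Z_1, ..., Z_n) = s for some n and some s satisfying E,
   where the events {(Z_1..Z_n) = s} for s in E are disjoint. *)
Definition hs_Pr (lam : R) (o : V) (E : seq V -> bool) : \bar R :=
  (\sum_(0 <= n <oo)
     (\sum_(s <- walks n o | E s) walk_weight lam o o s)%:E)%E.

(* (Z_1..Z_n) = s with n = rho_k : exactly k visits to o at times 1..n and
   Z_n = o *)
Definition returns_k (o : V) (k : nat) (s : seq V) : bool :=
  (count (pred1 o) s == k) && (last o s == o) && (0 < size s)%N.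

Definition hs_recurrent (lam : R) (o : V) : Prop :=
  hs_Pr lam o (returns_k o 1) = 1%E.

Definition range_card (o : V) (s : seq V) : nat := size (undup (o :: s)).

End Graph.

(* Main.v *)
Require Import Defs.
From HB Require Import structures.
From mathcomp Require Import all_boot all_order all_algebra.
From mathcomp Require Import all_classical all_reals all_analysis.
From mathcomp Require Import ring lra zify.
Import Order.TTheory GRing.Theory Num.Theory.
Set Implicit Arguments. Unset Strict Implicit. Unset Printing Implicit Defensive.
Local Open Scope ring_scope.

Section GraphFacts.
Variables (V : eqType) (nbrs : V -> seq V) (o : V).
Hypothesis Hs : simple_graph nbrs.
Hypothesis Hc : connected_graph nbrs.

Local Notation d := (gdist nbrs o).

Lemma nbr_sym x y : (y \in nbrs x) = (x \in nbrs y).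
Proof. by case: Hs => H _ _; rewrite H. Qed.

Lemma nbr_neq x y : y \in nbrs x -> y != x.
Proof. by case: Hs => _ H _ hy; apply/eqP => e; move: (H x); rewrite -{1}e hy. Qed.

Lemma nbrs_uniq x : uniq (nbrs x).
Proof. by case: Hs. Qed.

Lemma ball_mono n : {subset Defs.ball nbrs o n <= Defs.ball nbrs o n.+1}.
Proof. by move=> x hx /=; rewrite mem_cat hx. Qed.

Lemma ball_mono_le n m : (n <= m)%N -> {subset Defs.ball nbrs o n <= Defs.ball nbrs o m}.
Proof.
move=> /subnK <-; elim: (m - n)%N => [//|k IH] x hx.
by rewrite addSn; apply: ball_mono; apply: IH.
Qed.

Lemma ball_nbr n x y : x \in Defs.ball nbrs o n -> y \in nbrs x -> y \in Defs.ball nbrs o n.+1.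
Proof. by move=> hx hy /=; rewrite mem_cat; apply/orP; right; apply/flatten_mapP; exists x. Qed.

Lemma gdistP v : v \in Defs.ball nbrs o (d v) /\ forall n, v \in Defs.ball nbrs o n -> (d v <= n)%N.
Proof.
rewrite /gdist; case: pselect => [h|nh]; last by exfalso; apply: nh; apply: Hc.
by case: ex_minnP.
Qed.

Lemma mem_ball v n : (v \in Defs.ball nbrs o n) = (d v <= n)%N.
Proof.
have [h1 h2] := gdistP v.
apply/idP/idP; first exact: h2.
by move=> le; apply: (ball_mono_le le).
Qed.

Lemma gdist_o : d o = 0%N.
Proof. by apply/eqP; rewrite -leqn0 -mem_ball /= inE. Qed.

Lemma gdist0 v : d v = 0%N -> v = o.
Proof. by move=> h; have := (mem_ball v 0); rewrite h /= inE => /eqP. Qed.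

Lemma gdist_nbr x y : y \in nbrs x -> (d y <= (d x).+1)%N.
Proof. by move=> hy; rewrite -mem_ball; apply: (ball_nbr _ hy); rewrite mem_ball. Qed.

Lemma gdist_pred v : v != o -> exists2 w, w \in nbrs v & (d w).+1 = d v.
Proof.
move=> nvo; have [h1 h2] := gdistP v.
case E: (d v) h1 => [|n] /=; first by move: nvo; rewrite (gdist0 E) eqxx.
rewrite mem_cat => /orP [] h.
  by have := h2 _ h; rewrite E ltnn.
case/flatten_mapP: h => w hw hv; exists w; first by rewrite nbr_sym.
have := gdist_nbr hv; rewrite E ltnS => le1.
apply/eqP; rewrite eqSS eqn_leq le1 andbT -mem_ball //.
Qed.

End GraphFacts.
Lemma sum_if (R : comNzRingType) (T : Type) (s : seq T) (b : pred T) (A B : R) :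
  \sum_(y <- s) (if b y then A else B) =
  A * (count b s)%:R + B * (size s - count b s)%:R.
Proof.
elim: s => [|a s IH]; first by rewrite big_nil !mulr0 addr0.
rewrite big_cons IH /=; case: (b a) => /=.
  by rewrite subSS natrD mulrDr; ring.
rewrite add0n subSn ?count_size // -addn1 natrD; ring.
Qed.

Section Cond.
Variables (R : realType) (V : eqType) (nbrs : V -> seq V) (o : V) (lam : R).
Hypothesis Hs : simple_graph nbrs.
Hypothesis Hc : connected_graph nbrs.
Hypothesis Hlam : 1 < lam.
Local Notation d := (gdist nbrs o).

Definition cond x y : R := lam ^- (minn (d x) (d y)).
Definition piv x : R := \sum_(y <- nbrs x) cond x y.

Lemma lam_gt0 : 0 < lam. Proof. by apply: lt_trans Hlam. Qed.

Lemma cond_gt0 x y : 0 < cond x y.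
Proof. by rewrite /cond invr_gt0 exprn_gt0 // lam_gt0. Qed.

Lemma condC x y : cond x y = cond y x.
Proof. by rewrite /cond minnC. Qed.

Lemma piv_ge0 x : 0 <= piv x.
Proof. by apply: sumr_ge0 => y _; apply/ltW/cond_gt0. Qed.

Lemma cond_down x y : y \in nbrs x ->
  cond x y = lam ^- d x * (if ((d y + 1)%N == d x) then lam else 1).
Proof.
move=> hy; have l1 := gdist_nbr o Hc hy.
have l2 : (d x <= (d y).+1)%N by apply: (gdist_nbr o Hc); rewrite -(nbr_sym Hs).
have lz : lam != 0 by rewrite gt_eqF // lam_gt0.
rewrite /cond addn1; case: eqP => [e|ne].
  rewrite -e (minn_idPr (leqnSn _)) exprSr invfM -mulrA mulVf ?mulr1 //.
rewrite mulr1 (minn_idPl _) //.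
by move: l2 ne; clear; move=> l2 ne; apply/negPn/negP; rewrite -ltnNge => h; apply: ne; apply/eqP; rewrite eqn_leq h l2.
Qed.

Lemma piv_den x : piv x = lam ^- d x *
  (lam * (count (fun u => (d u + 1)%N == d x) (nbrs x))%:R
   + (size (nbrs x) - count (fun u => (d u + 1)%N == d x) (nbrs x))%:R).
Proof.
rewrite /piv (eq_big_seq (fun y => lam ^- d x * (if ((d y + 1)%N == d x) then lam else 1))).
  by rewrite -mulr_sumr sum_if mul1r.
by move=> y hy; rewrite cond_down.
Qed.

Lemma hs_prob_c x y : y \in nbrs x -> hs_prob nbrs lam o x y = cond x y / piv x.
Proof.
move=> hy; rewrite /hs_prob hy piv_den cond_down //.
have lz : lam ^- d x != 0 by rewrite invr_eq0 expf_neq0 // gt_eqF // lam_gt0.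
set den := (_ + _)%R.
rewrite invfM mulrACA mulfV // mul1r.
by case: eqP => _ /=; rewrite mul1r ?div1r.
Qed.

Lemma hs_prob_ge0 x y : 0 <= hs_prob nbrs lam o x y.
Proof.
case hy: (y \in nbrs x); last by rewrite /hs_prob hy.
by rewrite hs_prob_c // divr_ge0 ?piv_ge0 // ltW // cond_gt0.
Qed.

Lemma sum_hs_prob x (f : V -> R) :
  \sum_(y <- nbrs x) hs_prob nbrs lam o x y * f y =
  (\sum_(y <- nbrs x) cond x y * f y) / piv x.
Proof.
rewrite mulr_suml; apply: eq_big_seq => y hy.
by rewrite hs_prob_c // mulrAC.
Qed.

Lemma sum_hs_prob_le1 x : \sum_(y <- nbrs x) hs_prob nbrs lam o x y <= 1.
Proof.
rewrite (eq_bigr (fun y => hs_prob nbrs lam o x y * 1)); last by move=> *; rewrite mulr1.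
rewrite sum_hs_prob.
rewrite (eq_bigr (fun y => cond x y)); last by move=> *; rewrite mulr1.
rewrite -/(piv x); have [->|nz] := eqVneq (piv x) 0; first by rewrite mul0r.
by rewrite mulfV.
Qed.

End Cond.

Section SumLemmas.
Variable R : realType.

Lemma sum_sub_uniq (T : eqType) (s t : seq T) (F : T -> R) :
  uniq t -> {subset t <= s} -> (forall x, 0 <= F x) ->
  \sum_(x <- t) F x <= \sum_(x <- s) F x.
Proof.
elim: s t => [|a s IH] t ut sub F0.
  by case: t ut sub => [|b t] // _ /(_ b); rewrite inE eqxx => /(_ isT).
rewrite big_cons; case hat: (a \in t).
  rewrite (perm_big _ (perm_to_rem hat)) big_cons lerD2l; apply: IH => //.
    by apply: rem_uniq.
  move=> x hx; have := sub x (mem_rem hx); rewrite inE => /orP [/eqP e|//].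
  by move: hx; rewrite e mem_rem_uniqF // ?hat.
apply: le_trans (_ : \sum_(x <- s) F x <= _); last by rewrite lerDr.
apply: IH => // x hx; have := sub x hx; rewrite inE => /orP [/eqP e|//].
by move: hx; rewrite e hat.
Qed.

Lemma sum_pick (T : eqType) (A : seq T) (j : T) (g : T -> R) :
  j \in A -> uniq A -> \sum_(x <- A) (x == j)%:R * g x = g j.
Proof.
move=> jA uA; rewrite (bigD1_seq j) //= eqxx mul1r big1 ?addr0 //.
by move=> x /negbTE ->; rewrite mul0r.
Qed.

Lemma key_ineq (a b Rr rho : R) : 0 <= Rr -> 0 < rho -> (Rr = 0 -> a = 0) ->
  (a + b) ^+ 2 / (Rr + rho) <= a ^+ 2 / Rr + b ^+ 2 / rho.
Proof.
move=> hR hr ha; have [e|nz] := eqVneq Rr 0.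
  by rewrite e (ha e) add0r expr0n /= invr0 !mulr0 add0r; rewrite add0r.
have Rp : 0 < Rr by rewrite lt_def nz hR.
set X := a / Rr; set Y := b / rho.
have ea : a = X * Rr by rewrite /X mulfVK // gt_eqF.
have eb : b = Y * rho by rewrite /Y mulfVK // gt_eqF.
have e1 : a ^+ 2 / Rr = X ^+ 2 * Rr by rewrite ea; field; rewrite gt_eqF.
have e2 : b ^+ 2 / rho = Y ^+ 2 * rho by rewrite eb; field; rewrite gt_eqF.
rewrite e1 e2 ler_pdivrMr ?addr_gt0 // ea eb.
have h : 0 <= (X - Y) ^+ 2 * Rr * rho.
  by apply: mulr_ge0; [apply: mulr_ge0; [apply: sqr_ge0| apply: ltW]| apply: ltW].
rewrite -subr_ge0; suff -> : (X ^+ 2 * Rr + Y ^+ 2 * rho) * (Rr + rho) - (X * Rr + Y * rho) ^+ 2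
  = (X - Y) ^+ 2 * Rr * rho by [].
ring.
Qed.

End SumLemmas.

Fixpoint pp (V : Type) (pf : V -> V) (n : nat) (w : V) : seq (V * V) :=
  match n with
  | 0 => [::]
  | n'.+1 => (pf w, w) :: (w, pf w) :: pp pf n' (pf w)
  end.

Section Escape.
Variables (R : realType) (V : eqType) (nbrs : V -> seq V) (o : V) (lam : R).
Hypothesis Hs : simple_graph nbrs.
Hypothesis Hc : connected_graph nbrs.
Hypothesis Hlam : 1 < lam.
Local Notation d := (gdist nbrs o).
Local Notation cond := (cond nbrs o lam).
Variables (L : nat) (v : V).
Hypothesis hvo : v != o.
Hypothesis hvL : (d v <= L)%N.
Variable pf : V -> V.
Hypothesis Hpf : forall w, w != o -> pf w \in nbrs w /\ (d (pf w)).+1 = d w.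

Let cg x y : 0 < cond x y := cond_gt0 nbrs o Hlam x y.
Let cg0 x y : 0 <= cond x y := ltW (cg x y).

Definition Aset := undup (Defs.ball nbrs o L).
Lemma memA y : (y \in Aset) = (d y <= L)%N.
Proof. by rewrite mem_undup (mem_ball o Hc). Qed.
Lemma uA : uniq Aset. Proof. exact: undup_uniq. Qed.

Definition piA x := \sum_(y <- nbrs x | y \in Aset) cond x y.

Lemma piA_ge0 x : 0 <= piA x.
Proof. by apply: sumr_ge0 => y _; apply: cg0. Qed.

Fixpoint hs (m : nat) (x : V) : R :=
  match m with
  | 0 => (x == v)%:R
  | m'.+1 => if x == v then 1 else if x == o then 0 else
       (\sum_(y <- nbrs x | y \in Aset) cond x y * hs m' y) / piA x
  end.

Lemma hs_o m : hs m o = 0.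
Proof. by case: m => [|m] /=; rewrite eq_sym (negbTE hvo) ?eqxx. Qed.

Lemma hs_v m : hs m v = 1.
Proof. by case: m => [|m] /=; rewrite eqxx. Qed.

Lemma hs_bnd m x : 0 <= hs m x <= 1.
Proof.
elim: m x => [|m IH] x /=; first by case: (x == v); rewrite ?lexx ?ler01.
case: (x == v); first by rewrite ler01 lexx.
case: (x == o); first by rewrite lexx ler01.
have S0 : 0 <= \sum_(y <- nbrs x | y \in Aset) cond x y * hs m y.
  by apply: sumr_ge0 => y _; rewrite mulr_ge0 ?cg0 //; case/andP: (IH y).
have S1 : \sum_(y <- nbrs x | y \in Aset) cond x y * hs m y <= piA x.
  apply: ler_sum => y _; rewrite -{2}(mulr1 (cond x y)) ler_wpM2l ?cg0 //.
  by case/andP: (IH y).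
rewrite divr_ge0 ?piA_ge0 //=.
have [->|nz] := eqVneq (piA x) 0; first by rewrite invr0 mulr0 ler01.
have pp0 : 0 < piA x by rewrite lt_def nz piA_ge0.
by rewrite ler_pdivrMr // mul1r.
Qed.

Lemma hs_mono m x : hs m x <= hs m.+1 x.
Proof.
elim: m x => [|m IH] x.
  rewrite /=; case: (x == v) => //; case: (x == o) => //.
  by apply: divr_ge0; [apply: sumr_ge0 => y _; rewrite mulr_ge0 ?cg0 //; case/andP: (hs_bnd 0 y)|apply: piA_ge0].
rewrite [hs m.+1 x]/= [hs m.+2 x]/=; case: (x == v) => //; case: (x == o) => //.
apply: ler_wpM2r; first by rewrite invr_ge0 piA_ge0.
by apply: ler_sum => y _; apply: ler_wpM2l; [apply: cg0|apply: IH].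
Qed.

Definition Lf (f : V -> R) x := \sum_(y <- nbrs x | y \in Aset) cond x y * (f x - f y).

Lemma sym_swap (G : V -> V -> R) :
  \sum_(x <- Aset) \sum_(y <- nbrs x | y \in Aset) G x y =
  \sum_(x <- Aset) \sum_(y <- nbrs x | y \in Aset) G y x.
Proof.
have E (H : V -> V -> R) x : \sum_(y <- nbrs x | y \in Aset) H x y =
    \sum_(y <- Aset) (y \in nbrs x)%:R * H x y.
  rewrite -big_filter (perm_big [seq y <- Aset | y \in nbrs x]).
    rewrite big_filter big_mkcond; apply: eq_bigr => y _.
    by case: (y \in nbrs x); rewrite ?mul1r ?mul0r.
  apply: uniq_perm; rewrite ?filter_uniq ?uA ?(nbrs_uniq Hs) // => y.
  by rewrite !mem_filter andbC.
rewrite (eq_bigr _ (fun x _ => E G x)).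
rewrite (eq_bigr _ (fun x _ => E (fun a b => G b a) x)) /=.
rewrite exchange_big /=; apply: eq_bigr => x _; apply: eq_bigr => y _.
by rewrite (nbr_sym Hs).
Qed.

Definition Tf (f : V -> R) := \sum_(x <- Aset) \sum_(y <- nbrs x | y \in Aset)
  cond x y * (f x - f y) ^+ 2.

Lemma energy f : \sum_(x <- Aset) f x * Lf f x = Tf f / 2.
Proof.
set S := \sum_(x <- Aset) _.
have eS : S = \sum_(x <- Aset) \sum_(y <- nbrs x | y \in Aset) cond x y * (f x - f y) * f x.
  by apply: eq_bigr => x _; rewrite /Lf mulr_sumr; apply: eq_bigr => y _; rewrite mulrC.
suff -> : Tf f = S + S by field.
rewrite {2}eS sym_swap eS -big_split /=; apply: eq_bigr => x _.
rewrite -big_split /=; apply: eq_bigr => y _; rewrite (condC nbrs o lam y x); ring.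
Qed.

Lemma conserv f : \sum_(x <- Aset) Lf f x = 0.
Proof.
set S := \sum_(x <- Aset) _.
have eS : S = \sum_(x <- Aset) \sum_(y <- nbrs x | y \in Aset) cond x y * (f x - f y) by [].
suff h : S + S = 0 by lra.
rewrite {2}eS sym_swap eS -big_split /= big1_seq // => x _.
rewrite -big_split /= big1 // => y _; rewrite (condC nbrs o lam y x); ring.
Qed.

Definition Epairs := flatten [seq [seq (x, y) | y <- [seq y <- nbrs x | y \in Aset]] | x <- Aset].

Definition Fp (f : V -> R) (p : V * V) := cond p.1 p.2 * (f p.1 - f p.2) ^+ 2.

Lemma Tf_Epairs f : Tf f = \sum_(p <- Epairs) Fp f p.
Proof.
rewrite /Epairs big_flatten big_map /Tf; apply: eq_bigr => x _.
by rewrite big_map big_filter.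
Qed.

Lemma memE x y : x \in Aset -> y \in nbrs x -> y \in Aset -> (x, y) \in Epairs.
Proof.
move=> hx hy hy'; apply/flatten_mapP; exists x => //.
by apply: map_f; rewrite mem_filter hy' hy.
Qed.

Definition Rn n : R := \sum_(0 <= i < n) lam ^+ i.

Lemma Rn_ge0 n : 0 <= Rn n.
Proof. by apply: sumr_ge0 => i _; rewrite exprn_ge0 // ltW // (lt_trans ltr01 Hlam). Qed.

Lemma RnS n : Rn n.+1 = Rn n + lam ^+ n.
Proof. by rewrite /Rn big_nat_recr. Qed.

Lemma Rn_gt0 n : (0 < n)%N -> 0 < Rn n.
Proof.
case: n => // n _; rewrite RnS; apply: ltr_wpDl; first exact: Rn_ge0.
by rewrite exprn_gt0 // (lt_trans ltr01 Hlam).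
Qed.

Lemma Rn_geo n : Rn n * (lam - 1) = lam ^+ n - 1.
Proof.
elim: n => [|n IH]; first by rewrite /Rn big_geq // mul0r expr0 subrr.
by rewrite RnS mulrDl IH exprS; ring.
Qed.

Lemma d0o w : d w = 0%N -> w = o.
Proof. exact: (gdist0 Hc). Qed.

Lemma pp_prop (f : V -> R) n w : d w = n -> (n <= L)%N ->
  [/\ uniq (pp pf n w),
      {in pp pf n w, forall p, (d p.1 <= n)%N && (d p.2 <= n)%N},
      {subset pp pf n w <= Epairs} &
      2 * (f w - f o) ^+ 2 / Rn n <= \sum_(p <- pp pf n w) Fp f p].
Proof.
elim: n w => [|n IH] w dw nL.
  by rewrite /= big_nil (d0o dw) subrr expr0n /= mulr0 mul0r.
have wo : w != o by apply/eqP => e; move: dw; rewrite e (gdist_o o Hc).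
have [pw dpw] := Hpf wo; rewrite dw in dpw; case: dpw => dpw.
have [u1 b1 s1 l1] := IH (pf w) dpw (ltnW nL).
split.
- rewrite /= u1 andbT !inE negb_or -andbA; apply/and3P; split.
  + apply/eqP => -[e _]; move: dw; rewrite -e dpw; lia.
  + by apply/negP => /b1 /andP [_]; rewrite /= dw ltnn.
  + by apply/negP => /b1 /andP [] /=; rewrite dw ltnn.
- move=> p; rewrite !inE => /orP [/eqP -> /=|/orP [/eqP -> /=|/b1 /andP [h1 h2]]].
  + by rewrite dpw dw leqnSn leqnn.
  + by rewrite dpw dw leqnSn leqnn.
  + by rewrite (leq_trans h1) ?(leq_trans h2).
- have pA : pf w \in Aset by rewrite memA dpw ltnW.
  have wA : w \in Aset by rewrite memA dw.
  move=> p; rewrite !inE => /orP [/eqP ->|/orP [/eqP ->|/s1 //]].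
  + by apply: memE => //; rewrite (nbr_sym Hs).
  + by apply: memE.
- rewrite /= !big_cons.
  have eF : Fp f (w, pf w) = Fp f (pf w, w).
    by rewrite /Fp /= (condC nbrs o lam) -sqrrN opprB.
  rewrite eF addrA.
  set a := f (pf w) - f o; set b := f w - f (pf w).
  have ec : cond (pf w) w = (lam ^+ n)^-1.
    by rewrite /cond dpw dw (minn_idPl (leqnSn n)).
  have lp : 0 < lam ^+ n by rewrite exprn_gt0 // (lt_trans ltr01 Hlam).
  have ha : Rn n = 0 -> a = 0.
    have [n0|npos] := posnP n.
      by rewrite n0 in dpw; rewrite /a (d0o dpw) subrr.
    by move=> e; have := Rn_gt0 npos; rewrite e ltxx.
  have := key_ineq b (Rn_ge0 n) lp ha; rewrite -RnS => hk.
  have eab : f w - f o = a + b by rewrite /a /b; ring.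
  rewrite eab.
  have h1 : 2 * (a + b) ^+ 2 / Rn n.+1 <= 2 * (a ^+ 2 / Rn n + b ^+ 2 / lam ^+ n).
    by rewrite -mulrA ler_wpM2l.
  apply: le_trans h1 _.
  rewrite mulrDr addrC; apply: lerD.
    by apply: le_trans l1; rewrite mulrA.
  rewrite /Fp /= ec -sqrrN opprB -/b [lam ^- n * _]mulrC; lra.
Qed.

Lemma oA : o \in Aset. Proof. by rewrite memA (gdist_o o Hc). Qed.
Lemma vA : v \in Aset. Proof. by rewrite memA. Qed.

Lemma split3 (h : V -> R) : \sum_(x <- Aset) h x =
  h o + h v + \sum_(x <- Aset) ((x != o) && (x != v))%:R * h x.
Proof.
rewrite -(sum_pick h oA uA) -(sum_pick h vA uA) -!big_split /=; apply: eq_bigr => x _.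
case: (eqVneq x o) => [->|xo]; first by rewrite eq_sym (negbTE hvo) /=; ring.
by case: (eqVneq x v) => [->|xv] /=; ring.
Qed.

Lemma filterA_all x (F : V -> R) : (d x < L)%N ->
  \sum_(y <- nbrs x | y \in Aset) F y = \sum_(y <- nbrs x) F y.
Proof.
move=> dx; rewrite big_seq_cond [RHS]big_seq_cond; apply: eq_bigl => y.
case hy: (y \in nbrs x) => //=; rewrite memA.
exact: leq_trans (gdist_nbr o Hc hy) dx.
Qed.

Lemma piA_gt0 x : x \in Aset -> x != o -> 0 < piA x.
Proof.
move=> xA xo; have [h1 h2] := Hpf xo.
have pA : pf x \in Aset by rewrite memA; move: xA; rewrite memA -h2; apply: ltnW.
apply: lt_le_trans (cg x (pf x)) _.
rewrite /piA -big_filter.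
have := @sum_sub_uniq R V [seq y <- nbrs x | y \in Aset] [:: pf x] (cond x).
rewrite big_cons big_nil addr0; apply => //.
  by move=> y; rewrite inE => /eqP ->; rewrite mem_filter pA h1.
Qed.

Lemma Lf_int m x : x \in Aset -> x != o -> x != v ->
  Lf (hs m) x = piA x * (hs m x - hs m.+1 x).
Proof.
move=> xA xo xv; have pp0 := piA_gt0 xA xo.
rewrite [hs m.+1 x]/= (negbTE xv) (negbTE xo) /Lf.
rewrite (eq_bigr (fun y => hs m x * cond x y - cond x y * hs m y)); last first.
  by move=> y _; ring.
rewrite sumrB -mulr_sumr -/(piA x); field; rewrite gt_eqF //.
Qed.

Definition Lam m := \sum_(x <- Aset) ((x != o) && (x != v))%:R * (piA x * (hs m.+1 x - hs m x)).

Lemma Lam_ge0 m : 0 <= Lam m.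
Proof.
apply: sumr_ge0 => x _; rewrite mulr_ge0 ?ler0n // mulr_ge0 ?piA_ge0 //.
by rewrite subr_ge0 hs_mono.
Qed.

Lemma Lam_sum M : \sum_(0 <= m < M) Lam m <= \sum_(x <- Aset) piA x.
Proof.
rewrite /Lam exchange_big /=; apply: ler_sum => x _.
rewrite -mulr_sumr -mulr_sumr telescope_sumr //.
have h1 : hs M x - hs 0 x <= 1.
  by case/andP: (hs_bnd M x) => _ a; case/andP: (hs_bnd 0 x) => b _; lra.
case: ((x != o) && (x != v)); rewrite ?mul0r ?piA_ge0 // mul1r.
by rewrite -{2}(mulr1 (piA x)) ler_wpM2l ?piA_ge0.
Qed.

Lemma pigeon (Lm : nat -> R) (Pi eps : R) : 0 < eps ->
  (forall M, \sum_(0 <= m < M) Lm m <= Pi) -> exists m, Lm m <= eps.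
Proof.
move=> ep hs'; case: (pselect (exists m, Lm m <= eps)) => // H; exfalso.
have hl m : eps < Lm m by rewrite ltNge; apply/negP => h; apply: H; exists m.
set M := (Num.truncn (Pi / eps)).+1.
have h1 := hs' M.
have h2 : \sum_(0 <= m < M) eps <= \sum_(0 <= m < M) Lm m.
  by apply: ler_sum => m _; apply/ltW/hl.
rewrite sumr_const_nat subn0 in h2.
have h3 : Pi / eps < M%:R by rewrite -truncn_le_nat.
rewrite ltr_pdivrMr // in h3.
have : Pi < eps *+ M by rewrite -mulr_natr mulrC.
by rewrite ltNge (le_trans h2 h1).
Qed.

Lemma escape_sec : exists u : V -> R, [/\ u o = 0, u v = 1, (forall x, 0 <= u x <= 1),
  (forall x, x != o -> x != v -> (d x < L)%N ->
      u x <= \sum_(y <- nbrs x) hs_prob nbrs lam o x y * u y) &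
  (lam - 1) / lam ^+ d v <= \sum_(y <- nbrs o) u y].
Proof.
set n := d v.
have npos : (0 < n)%N.
  by rewrite lt0n; apply/eqP => e; move: hvo; rewrite (d0o e) eqxx.
have Rpos := Rn_gt0 npos.
have lp : 0 < lam ^+ n by rewrite exprn_gt0 // (lt_trans ltr01 Hlam).
set eps := (Rn n)^-1 - (lam - 1) / lam ^+ n.
have eps_pos : 0 < eps.
  have e1 : (Rn n)^-1 * (Rn n * lam ^+ n) = lam ^+ n by field; rewrite gt_eqF.
  have e2 : (lam - 1) / lam ^+ n * (Rn n * lam ^+ n) = Rn n * (lam - 1).
    by field; rewrite gt_eqF.
  have e : eps * (Rn n * lam ^+ n) = 1 by rewrite /eps mulrBl e1 e2 Rn_geo; ring.
  by rewrite -(pmulr_lgt0 _ (mulr_gt0 Rpos lp)) e ltr01.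
have [m hm] := pigeon eps_pos Lam_sum.
exists (hs m); split.
- exact: hs_o.
- exact: hs_v.
- exact: hs_bnd.
- move=> x xo xv dx; rewrite (sum_hs_prob o Hs Hc Hlam).
  apply: le_trans (hs_mono m x) _.
  rewrite [hs m.+1 x]/= (negbTE xv) (negbTE xo) filterA_all //.
  by rewrite /piA filterA_all.
have L1 : (0 < L)%N by apply: leq_trans npos hvL.
have eFo : \sum_(y <- nbrs o) hs m y = \sum_(y <- nbrs o | y \in Aset) cond o y * hs m y.
  rewrite filterA_all ?(gdist_o o Hc) //; apply: eq_bigr => y _.
  by rewrite /cond (gdist_o o Hc) min0n expr0 invr1 mul1r.
rewrite eFo.
set f := hs m.
have E1 := energy f; rewrite split3 in E1.
have E2 := conserv f; rewrite split3 in E2.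
have eLo : Lf f o = - \sum_(y <- nbrs o | y \in Aset) cond o y * f y.
  rewrite /Lf -sumrN; apply: eq_bigr => y _; rewrite /f hs_o; ring.
have eW : \sum_(x <- Aset) ((x != o) && (x != v))%:R * Lf f x = - Lam m.
  rewrite /Lam -sumrN; apply: eq_big_seq => x xA.
  case: (eqVneq x o) => [->|xo]; first by rewrite /= !mul0r oppr0.
  case: (eqVneq x v) => [->|xv]; first by rewrite andbF /= !mul0r oppr0.
  by rewrite /= /f Lf_int // !mul1r -mulrN opprB.
have W0 : \sum_(x <- Aset) ((x != o) && (x != v))%:R * (f x * Lf f x) <= 0.
  rewrite big_seq; apply: sumr_le0 => x xA.
  case: (eqVneq x o) => [->|xo]; first by rewrite /= mul0r.
  case: (eqVneq x v) => [->|xv]; first by rewrite andbF /= mul0r.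
  rewrite /= mul1r /f Lf_int // mulrA.
  rewrite -[X in _ <= X](mulr0 (hs m x * piA x)); apply: ler_wpM2l.
    by rewrite mulr_ge0 ?piA_ge0 //; case/andP: (hs_bnd m x).
  by rewrite subr_le0 hs_mono.
have T2 : 2 / Rn n <= Tf f.
  have [u1 _ s1 l1] := pp_prop f (erefl n) hvL.
  rewrite /f hs_o hs_v subr0 expr1n mulr1 in l1.
  apply: le_trans l1 _; rewrite Tf_Epairs.
  apply: sum_sub_uniq => // p; rewrite /Fp mulr_ge0 ?sqr_ge0 //.
rewrite eW in E2.
rewrite /f hs_o hs_v mul0r mul1r add0r in E1.
rewrite eLo in E2.
have hm' : Lam m <= eps := hm.
move: E1 E2 W0 T2 hm'; rewrite /eps.
set S := \sum_(y <- nbrs o | y \in Aset) _.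
set W := \sum_(x <- Aset) _.
move=> E1 E2 W0 T2 hm'.
have : (Rn n)^-1 = 1 / Rn n by rewrite div1r.
lra.
Qed.

End Escape.

Lemma escape (R : realType) (V : eqType) (nbrs : V -> seq V) (o : V) (lam : R) :
  simple_graph nbrs -> connected_graph nbrs -> 1 < lam ->
  forall (L : nat) (v : V), v != o -> (gdist nbrs o v <= L)%N ->
  exists u : V -> R, [/\ u o = 0, u v = 1, (forall x, 0 <= u x <= 1),
  (forall x, x != o -> x != v -> (gdist nbrs o x < L)%N ->
      u x <= \sum_(y <- nbrs x) hs_prob nbrs lam o x y * u y) &
  (lam - 1) / lam ^+ gdist nbrs o v <= \sum_(y <- nbrs o) u y].
Proof.
move=> Hs Hc Hlam L v hvo hvL.
have H : forall w, exists p, w != o -> p \in nbrs w /\ (gdist nbrs o p).+1 = gdist nbrs o w.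
  move=> w; case: (eqVneq w o) => [->|nw]; first by exists o.
  by have [p hp e] := gdist_pred Hs Hc nw; exists p.
have [pf Hpf] := choice H.
exact: (escape_sec Hs Hc Hlam hvo hvL Hpf).
Qed.

Section Walks.
Variables (R : realType) (V : eqType) (nbrs : V -> seq V) (o : V) (lam : R).
Hypothesis Hs : simple_graph nbrs.
Hypothesis Hc : connected_graph nbrs.
Hypothesis Hlam : 1 < lam.
Local Notation d := (gdist nbrs o).
Local Notation P := (hs_prob nbrs lam o).
Local Notation w := (walk_weight nbrs lam o).
Variables (k N : nat).

Definition Ev (vis : seq V) (j : nat) (x : V) (s : seq V) : bool :=
  [&& count (pred1 o) s == (k - j)%N, last x s == o, (0 < size s)%N &
      ((size (undup (vis ++ s)))%:R <= N%:R / 4 :> R)].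
Definition G n x vis j := \sum_(s <- walks nbrs n x | Ev vis j x s) w x s.
Definition Q m x vis j := \sum_(0 <= n < m) G n x vis j.

Lemma walks_size n x s : s \in walks nbrs n x -> size s = n.
Proof.
elim: n x s => [|n IH] x s /=; first by rewrite inE => /eqP ->.
by case/flatten_mapP => y _ /mapP [t ht ->] /=; rewrite (IH _ _ ht).
Qed.

Lemma w_ge0 x s : 0 <= w x s.
Proof.
elim: s x => [|y s IH] x /=; first exact: ler01.
by rewrite mulr_ge0 // (hs_prob_ge0 o Hs Hc Hlam).
Qed.

Lemma G_ge0 n x vis j : 0 <= G n x vis j.
Proof. by apply: sumr_ge0 => s _; apply: w_ge0. Qed.

Lemma Q_ge0 m x vis j : 0 <= Q m x vis j.
Proof. by apply: sumr_ge0 => n _; apply: G_ge0. Qed.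

Lemma Ev_nil vis j x : Ev vis j x [::] = false.
Proof. by rewrite /Ev /= !andbF. Qed.

Lemma Ev_cons_no vis j x y s : y != o -> Ev vis j x (y :: s) = Ev (rcons vis y) j y s.
Proof.
move=> yo; rewrite /Ev /= -cat_rcons; case: s => [|z s] /=.
  by rewrite (negbTE yo) /= ?andbF.
by rewrite (negbTE yo) add0n.
Qed.

Lemma Ev_cons_o vis j x s : (j < k)%N -> (0 < size s)%N ->
  Ev vis j x (o :: s) = Ev (rcons vis o) j.+1 o s.
Proof.
move=> jk ss; rewrite /Ev /= -cat_rcons ss eqxx add1n.
have e : (k - j)%N = (k - j.+1).+1 by lia.
by rewrite e eqSS.
Qed.

Lemma G0 x vis j : G 0 x vis j = 0.
Proof. by rewrite /G /= big_cons big_nil Ev_nil. Qed.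

Lemma G_succ n x vis j : (j < k)%N -> G n.+1 x vis j =
  \sum_(y <- nbrs x) P x y * (if y == o then
      ((n == 0%N) && (j.+1 == k) && ((size (undup (rcons vis o)))%:R <= N%:R / 4 :> R))%:R
        + G n o (rcons vis o) j.+1
    else G n y (rcons vis y) j).
Proof.
move=> jk; rewrite /G /= big_flatten big_map; apply: eq_bigr => y _.
rewrite big_map (eq_bigr (fun s => P x y * w y s)) // -mulr_sumr; congr (_ * _).
case: eqP => [->|/eqP yo].
  case: n => [|n].
    rewrite /= !big_cons !big_nil Ev_nil addr0 /Ev /= eqxx cats1 addn0.
    have e1 : (1 == k - j)%N = (j.+1 == k) by apply/eqP/eqP; lia.
    by rewrite e1 addr0; case: (j.+1 == k); case: (_ <= _).
  rewrite (_ : (n.+1 == 0)%N = false) // !andFb add0r big_seq_cond [RHS]big_seq_cond; apply: eq_bigl => s.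
  case hs: (s \in walks nbrs n.+1 o); last by [].
  by rewrite !andTb Ev_cons_o // (walks_size hs).
by apply: eq_bigl => s; rewrite Ev_cons_no.
Qed.

Lemma Q_succ m x vis j : (j < k)%N -> Q m.+1 x vis j =
  \sum_(y <- nbrs x) P x y * (if y == o then
      ((0 < m)%N && (j.+1 == k) && ((size (undup (rcons vis o)))%:R <= N%:R / 4 :> R))%:R
        + Q m o (rcons vis o) j.+1
    else Q m y (rcons vis y) j).
Proof.
move=> jk; rewrite /Q big_nat_recl // G0 add0r.
under eq_bigr do rewrite G_succ //.
rewrite exchange_big /=; apply: eq_bigr => y _; rewrite -mulr_sumr; congr (_ * _).
case: (y == o); last by [].
rewrite big_split /=; congr (_ + _).
case: m => [|m]; first by rewrite !big_geq.
by rewrite big_nat_recl //= big1 ?addr0 // => i _.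
Qed.

Lemma Q_k m vis : Q m o vis k = 0.
Proof.
rewrite /Q big1 // => n _; rewrite /G big1 // => s; rewrite /Ev subnn.
case/and4P => c l sz _; exfalso.
case: s c l sz => [|z s] // c l _.
have : o \in z :: s by rewrite -(eqP l) /= mem_last.
by rewrite -has_pred1 has_count (eqP c).
Qed.

Lemma Q_k0 m vis j : k = 0%N -> Q m o vis j = 0.
Proof.
move=> e; rewrite /Q big1 // => n _; rewrite /G big1 // => s; rewrite /Ev e sub0n.
case/and4P => c l sz _; exfalso.
case: s c l sz => [|z s] // c l _.
have : o \in z :: s by rewrite -(eqP l) /= mem_last.
by rewrite -has_pred1 has_count (eqP c).
Qed.

Lemma undup_size_cat (a b : seq V) : (size (undup a) <= size (undup (a ++ b)))%N.
Proof.
apply: uniq_leq_size; first exact: undup_uniq.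
by move=> z; rewrite !mem_undup mem_cat => ->.
Qed.

Lemma Q_big m x vis j : N%:R / 4 < (size (undup vis))%:R :> R -> Q m x vis j = 0.
Proof.
move=> h; rewrite /Q big1 // => n _; rewrite /G big1 // => s /and4P [_ _ _ h2].
by exfalso; move: h2; rewrite leNgt (lt_le_trans h) // ler_nat undup_size_cat.
Qed.

End Walks.

Section Phi.
Variables (R : realType) (V : eqType) (nbrs : V -> seq V) (o : V) (lam : R).
Hypothesis Hs : simple_graph nbrs.
Hypothesis Hc : connected_graph nbrs.
Hypothesis Hlam : 1 < lam.
Local Notation d := (gdist nbrs o).
Local Notation P := (hs_prob nbrs lam o).
Variables (k N L r0 : nat) (U : V -> V -> R) (q : R).
Local Notation Q := (Q nbrs o lam k N).

Definition Br := undup (Defs.ball nbrs o r0).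
Definition aa : R := 1 - expR (-1).
Definition beta : R := 1 - aa * q.
Definition Dv (vis : seq V) := count (mem vis) Br.
Definition ED (vis : seq V) : R := expR (- (Dv vis)%:R).
Definition Kf (j : nat) : R := expR (N%:R / 4) * beta ^+ (k - j).
Definition Phi x vis j v : R :=
  if x == o then Kf j * ED vis
  else Kf j.+1 * ED vis * (1 - (v \notin vis)%:R * aa * U v x).

Hypothesis HU1 : forall v x, 0 <= U v x <= 1.
Hypothesis HUt : forall v, v \in Br -> v != o ->
  [/\ U v o = 0, U v v = 1,
      (forall x, x != o -> x != v -> (d x < L)%N ->
          U v x <= \sum_(y <- nbrs x) P x y * U v y) &
      q <= \sum_(y <- nbrs o) P o y * U v y].
Hypothesis Hb : 0 <= beta.
Hypothesis HN : (N <= size Br)%N.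
Hypothesis HN0 : (0 < N)%N.

Lemma aa_bnd : 0 <= aa <= 1.
Proof.
rewrite /aa subr_ge0 expR_le1 oppr_le0 ler01 /= lerBlDr lerDl.
exact: ltW (expR_gt0 _).
Qed.

Lemma Kf_ge0 j : 0 <= Kf j.
Proof. by rewrite mulr_ge0 ?exprn_ge0 // ltW // expR_gt0. Qed.

Lemma ED_gt0 vis : 0 < ED vis.
Proof. exact: expR_gt0. Qed.

Lemma ED_le vis vis' : (Dv vis <= Dv vis')%N -> ED vis' <= ED vis.
Proof. by move=> h; rewrite /ED ler_expR lerN2 ler_nat. Qed.

Lemma fac_ge0 v (vis : seq V) x : 0 <= 1 - (v \notin vis)%:R * aa * U v x.
Proof.
rewrite subr_ge0; case/andP: aa_bnd => a0 a1; case/andP: (HU1 v x) => u0 u1.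
case: (v \notin vis); rewrite ?mul0r ?ler01 // mul1r.
by rewrite -(mulr1 1) ler_pM.
Qed.

Lemma fac_le1 v (vis : seq V) x : 1 - (v \notin vis)%:R * aa * U v x <= 1.
Proof.
rewrite lerBlDr lerDl; case/andP: aa_bnd => a0 a1; case/andP: (HU1 v x) => u0 u1.
by rewrite !mulr_ge0.
Qed.

Lemma Phi_ge0 x vis j v : 0 <= Phi x vis j v.
Proof.
have E := ltW (ED_gt0 vis).
rewrite /Phi; case: (x == o).
  exact: mulr_ge0 (Kf_ge0 _) E.
exact: mulr_ge0 (mulr_ge0 (Kf_ge0 _) E) (fac_ge0 _ _ _).
Qed.

Lemma Dv_rcons_le vis y : (Dv vis <= Dv (rcons vis y))%N.
Proof. by apply: sub_count => z /=; rewrite mem_rcons inE => ->; rewrite orbT. Qed.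

Lemma Dv_rcons_in vis y : y \in vis -> Dv (rcons vis y) = Dv vis.
Proof.
move=> yv; apply: eq_count => z /=; rewrite mem_rcons inE.
by case: eqP => // ->.
Qed.

Lemma Dv_rcons_new vis y : y \in Br -> y \notin vis -> Dv (rcons vis y) = (Dv vis).+1.
Proof.
move=> yB yv; rewrite /Dv.
have e : count (mem (rcons vis y)) Br = count (predU (pred1 y) (mem vis)) Br.
  by apply: eq_count => z /=; rewrite mem_rcons inE.
rewrite e; have := count_predUI (pred1 y) (mem vis) Br.
have e2 : count (predI (pred1 y) (mem vis)) Br = 0%N.
  apply/eqP; rewrite -leqn0 leqNgt -has_count; apply/hasP => -[z _ /andP [/eqP -> /=]].
  by apply/negP.
have e3 : count (pred1 y) Br = 1%N by rewrite count_uniq_mem ?undup_uniq // yB.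
by rewrite e2 e3 addn0 add1n.
Qed.

Lemma Dv_le_size vis : (Dv vis <= size (undup vis))%N.
Proof.
rewrite /Dv -size_filter; apply: uniq_leq_size; first by rewrite filter_uniq ?undup_uniq.
by move=> z; rewrite mem_filter mem_undup => /andP [].
Qed.

Lemma step_new v vis y : v \in Br -> v != o -> v \notin vis -> forall K, 0 <= K ->
  K * ED (rcons vis y) * (1 - (v \notin rcons vis y)%:R * aa * U v y)
    <= K * ED vis * (1 - aa * U v y).
Proof.
move=> vB vo vv K K0; have [U0 U1 _ _] := HUt vB vo.
case: (eqVneq y v) => [->|yv].
  rewrite mem_rcons inE eqxx /= !mul0r subr0 mulr1 U1 mulr1.
  rewrite /ED Dv_rcons_new // -addn1 natrD opprD expRD -mulrA ler_wpM2l //.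
  by rewrite /aa opprB addrC subrK.
rewrite mem_rcons inE eq_sym (negbTE yv) (negbTE vv) /= mul1r.
apply: ler_wpM2r; first by have := fac_ge0 v [::] y; rewrite /= mul1r.
by apply: ler_wpM2l => //; apply: ED_le; apply: Dv_rcons_le.
Qed.

Lemma step_in v vis y : v \in vis -> forall K, 0 <= K ->
  K * ED (rcons vis y) * (1 - (v \notin rcons vis y)%:R * aa * U v y) <= K * ED vis.
Proof.
move=> vv K K0; rewrite mem_rcons inE vv orbT /= mul0r mul0r subr0 mulr1.
by apply: ler_wpM2l => //; apply: ED_le; apply: Dv_rcons_le.
Qed.

Lemma Kf_succ j : (j < k)%N -> Kf j = Kf j.+1 * beta.
Proof.
move=> jk; rewrite /Kf -mulrA -exprSr; congr (_ * _ ^+ _); lia.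
Qed.

Lemma main_ind m : forall x vis j v, (j < k)%N -> o \in vis -> x \in vis ->
  (d x + m <= L)%N -> (x != o -> v \in Br /\ v != o) ->
  Q m x vis j <= Phi x vis j v.
Proof.
have Pge0 := hs_prob_ge0 o Hs Hc Hlam.
have sumP := sum_hs_prob_le1 o Hs Hc Hlam.
have [a0 a1] := andP aa_bnd.
elim: m => [|m IH] x vis j v jk ov xv dL hv.
  by rewrite /Q big_geq //; apply: Phi_ge0.
case: (eqVneq x o) => [exo|xo].
  subst x; rewrite /Phi eqxx.
  case: (ltP (N%:R / 4 : R) (size (undup vis))%:R) => [big|small].
    by rewrite Q_big // mulr_ge0 ?Kf_ge0 // ltW // ED_gt0.
  have : ~~ all (mem vis) Br.
    apply/negP => /allP sub.
    have h1 : (size Br <= size (undup vis))%N.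
      by apply: uniq_leq_size; rewrite ?undup_uniq // => z /sub; rewrite mem_undup.
    have h2 : (N <= size (undup vis))%N := leq_trans HN h1.
    have h3 : (N%:R : R) <= (size (undup vis))%:R by rewrite ler_nat.
    have h4 : (0 : R) < N%:R by rewrite ltr0n.
    lra.
  case/allPn => v' v'B v'vis.
  have v'o : v' != o by apply/eqP => e; move: v'vis; rewrite e /= ov.
  have [U0 U1 Usub Uq] := HUt v'B v'o.
  rewrite Q_succ //.
  set C := Kf j.+1 * ED vis.
  have C0 : 0 <= C by rewrite mulr_ge0 ?Kf_ge0 // ltW // ED_gt0.
  apply: (@le_trans _ _ (\sum_(y <- nbrs o) P o y * (C * (1 - aa * U v' y)))).
    rewrite big_seq_cond [X in _ <= X]big_seq_cond; apply: ler_sum => y /andP [hy _].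
    have yo : y != o := nbr_neq Hs hy.
    rewrite (negbTE yo); apply: ler_wpM2l; first exact: Pge0.
    have dy : (d y + m <= L)%N.
      apply: leq_trans (leq_add (gdist_nbr o Hc hy) (leqnn m)) _.
      by rewrite addSn -addnS.
    have := IH y (rcons vis y) j v' jk; rewrite !mem_rcons !inE ov eqxx !orbT.
    move=> /(_ isT isT dy (fun _ => conj v'B v'o)) h.
    apply: le_trans h _; rewrite /Phi (negbTE yo).
    by rewrite /C; apply: (step_new y v'B v'o v'vis (Kf_ge0 j.+1)).
  rewrite (eq_bigr (fun y => C * P o y - C * aa * (P o y * U v' y))); last by move=> y _; ring.
  rewrite sumrB -!mulr_sumr.
  have h1 : C * (\sum_(y <- nbrs o) P o y) <= C * 1 by apply: ler_wpM2l.
  have h2 : C * aa * q <= C * aa * (\sum_(y <- nbrs o) P o y * U v' y).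
    by apply: ler_wpM2l => //; apply: mulr_ge0.
  have e : Kf j * ED vis = C - C * aa * q by rewrite (Kf_succ jk) /beta /C; ring.
  rewrite e; lra.
have [vB vo] := hv xo.
have [U0 U1 Usub Uq] := HUt vB vo.
rewrite /Phi (negbTE xo) Q_succ //.
set C := Kf j.+1 * ED vis.
have C0 : 0 <= C by rewrite mulr_ge0 ?Kf_ge0 // ltW // ED_gt0.
set b : R := (v \notin vis)%:R.
apply: (@le_trans _ _ (\sum_(y <- nbrs x) P x y * (C * (1 - b * aa * U v y)))).
  rewrite big_seq_cond [X in _ <= X]big_seq_cond; apply: ler_sum => y /andP [hy _].
  apply: ler_wpM2l; first exact: Pge0.
  case: (eqVneq y o) => [->|yo].
    rewrite U0 mulr0 subr0 mulr1.
    case: (eqVneq j.+1 k) => [ek|nek].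
      rewrite ek Q_k addr0 /C ek /Kf subnn expr0 mulr1.
      case H : ((size (undup (rcons vis o)))%:R <= N%:R / 4 :> R); last first.
        by rewrite andbF /= mulr_ge0 // ltW ?expR_gt0 ?ED_gt0.
      apply: (@le_trans _ _ 1); first by case: (_ && _); rewrite ?ler01.
      rewrite /ED -expRD -[X in X <= _](expR0 R) ler_expR subr_ge0.
      apply: le_trans _ H; rewrite ler_nat; apply: leq_trans (Dv_le_size vis) _.
      by rewrite -cats1 undup_size_cat.
    rewrite andbF /= add0r.
    have jk' : (j.+1 < k)%N by rewrite ltn_neqAle nek jk.
    have := IH o (rcons vis o) j.+1 v jk'; rewrite !mem_rcons !inE eqxx /= (gdist_o o Hc).
    move=> /(_ isT isT) h; apply: le_trans (h _ _) _.
      by rewrite ?add0n; apply: leq_trans dL; rewrite addnS; apply/leqW/leq_addl.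
      by [].
    by rewrite /Phi eqxx /C /ED Dv_rcons_in.
  have dy : (d y + m <= L)%N.
    apply: leq_trans (leq_add (gdist_nbr o Hc hy) (leqnn m)) _.
    by rewrite addSn -addnS.
  have := IH y (rcons vis y) j v jk; rewrite !mem_rcons !inE ov eqxx !orbT.
  move=> /(_ isT isT dy (fun _ => conj vB vo)) h.
  apply: le_trans h _; rewrite /Phi (negbTE yo) /b.
  case vin : (v \in vis) => /=.
    by rewrite mul0r mul0r subr0 mulr1 /C; apply: (step_in y vin (Kf_ge0 j.+1)).
  by rewrite mul1r /C; apply: (step_new y vB vo _ (Kf_ge0 j.+1)); rewrite vin.
rewrite (eq_bigr (fun y => C * P x y - C * b * aa * (P x y * U v y))); last by move=> y _; ring.
rewrite sumrB -!mulr_sumr.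
have h1 : C * (\sum_(y <- nbrs x) P x y) <= C * 1 by apply: ler_wpM2l.
case vin : (v \in vis).
  have eb : b = 0 by rewrite /b vin.
  by rewrite eb !mulr0 !mul0r !subr0 mulr1; rewrite mulr1 in h1.
have eb : b = 1 by rewrite /b vin.
have xv' : x != v by apply/eqP => e; move: vin; rewrite -e xv.
have h2 : C * aa * U v x <= C * aa * (\sum_(y <- nbrs x) P x y * U v y).
  apply: ler_wpM2l; first exact: mulr_ge0.
  by apply: Usub => //; apply: leq_trans dL; rewrite addnS ltnS leq_addr.
rewrite eb !mulr1 !mul1r; rewrite mulr1 in h1.
lra.
Qed.

Lemma main_final M : (0 < k)%N -> (M <= L)%N ->
  Q M o [:: o] 0 <= expR (N%:R / 4) * beta ^+ k.
Proof.
move=> k0 ML.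
have := @main_ind M o [:: o] 0 o k0 (mem_head _ _) (mem_head _ _).
rewrite (gdist_o o Hc) add0n => /(_ ML) h.
apply: le_trans (h _) _; first by rewrite eqxx.
rewrite /Phi eqxx /Kf subn0 -[X in _ <= X]mulr1 ler_wpM2l ?mulr_ge0 ?exprn_ge0 //.
by rewrite /ED expR_le1 oppr_le0 ler0n.
Qed.

End Phi.

Lemma sum1_seq (R : realType) (T : Type) (s : seq T) : \sum_(y <- s) (1 : R) = (size s)%:R.
Proof. by elim: s => [|a s IH]; rewrite ?big_nil // big_cons IH /= -addn1 natrD addrC. Qed.

Lemma aa_ge (R : realType) : 3 / 8 <= aa R.
Proof.
rewrite /aa expRN.
have e1 : 2 <= expR (1 : R) by have := expR_ge1Dx (1 : R).
have e2 : (expR (1 : R))^-1 <= 2^-1.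
  by rewrite lef_pV2 ?posrE ?expR_gt0.
lra.
Qed.

Lemma final_ineq (R : realType) (N k : nat) (a q : R) :
  3 / 8 <= a -> 0 <= 1 - a * q -> N%:R <= k%:R * q ->
  expR (N%:R / 4) * (1 - a * q) ^+ k <= expR (- (N%:R / 8)).
Proof.
move=> ha hb hkq.
have h1 : (1 - a * q) ^+ k <= expR (- (a * q)) ^+ k.
  apply: lerXn2r; [by rewrite nnegrE | by rewrite nnegrE ltW ?expR_gt0 | ].
  exact: expR_ge1Dx.
rewrite -expRM_natl in h1.
apply: le_trans (ler_wpM2l (ltW (expR_gt0 _)) h1) _.
rewrite -expRD ler_expR mulrN.
have a0 : 0 <= a by apply: le_trans ha; lra.
have h2 : a * N%:R <= k%:R * (a * q) by rewrite mulrCA; apply: ler_wpM2l.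
have h3 : 3 / 8 * N%:R <= a * N%:R by apply: ler_wpM2r.
have N0 : 0 <= N%:R :> R by [].
lra.
Qed.

Theorem proposition4p2 (R : realType) (V : eqType) (nbrs : V -> seq V) (o : V)
  (lam : R) (c : R) (k : nat) :
  simple_graph nbrs -> connected_graph nbrs ->
  1 < lam -> hs_recurrent nbrs lam o ->
  0 < c -> c < 1 ->
  ((5 * (lam - 1) / (size (nbrs o))%:R) `^ c^-1 <= k%:R) ->
  let N : nat :=
    minn (ball_card nbrs o (c * ln k%:R / ln lam))
         (Num.truncn ((lam - 1) / (size (nbrs o))%:R * k%:R `^ (1 - c))) in
  (hs_Pr nbrs lam o
     (fun s => returns_k o k s && ((range_card o s)%:R <= N%:R / 4 :> R)%R)
   <= (expR (- (N%:R / 8)))%:E)%E.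
Proof.
move=> Hs Hc Hlam _ c0 c1 _; cbv zeta.
set N := minn _ _.
pose Qf M := Q nbrs o lam k N M o [:: o] 0.
suff HM : forall M, Qf M <= expR (- (N%:R / 8)).
  rewrite /hs_Pr; apply: lime_le.
    apply: is_cvg_ereal_nneg_natsum => n _; rewrite lee_fin.
    by apply: sumr_ge0 => s _; apply: (w_ge0 o Hs Hc Hlam).
  apply: nearW => M; rewrite sumEFin lee_fin.
  apply: le_trans (HM M); rewrite le_eqVlt; apply/orP; left; apply/eqP.
  rewrite /Qf /Q; apply: eq_bigr => n _; rewrite /G; apply: eq_bigl => s.
  by rewrite /Ev /returns_k /range_card subn0 /= -!andbA.
move=> M; rewrite /Qf.
have E0 : 0 <= expR (- (N%:R / 8)) :> R by apply/ltW/expR_gt0.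
case: (posnP k) => [k0|kpos].
  by rewrite Q_k0.
case: (leqP N 3) => [N3|N4].
  rewrite Q_big //= ; have : (N%:R : R) <= 3 by rewrite ler_nat.
  by move=> h; lra.
have N0 : (0 < N)%N by apply: leq_trans N4.
set r0 := Num.truncn (c * ln k%:R / ln lam).
set L := (M + r0)%N.
set deg := size (nbrs o).
set q := (lam - 1) / (deg%:R * lam ^+ r0).
have lam0 : 0 < lam by apply: lt_trans Hlam.
have memBr v : (v \in Br nbrs o r0) = (gdist nbrs o v <= r0)%N.
  by rewrite /Br mem_undup (mem_ball o Hc).
have HN : (N <= size (Br nbrs o r0))%N by rewrite /N geq_minl.
have condo y : cond nbrs o lam o y = 1.
  by rewrite /cond (gdist_o o Hc) min0n expr0 invr1.
have pivo : piv nbrs o lam o = deg%:R.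
  by rewrite /piv (eq_bigr (fun _ => 1)) ?sum1_seq // => y _; rewrite condo.
have sumPo (u : V -> R) : \sum_(y <- nbrs o) hs_prob nbrs lam o o y * u y =
    (\sum_(y <- nbrs o) u y) / deg%:R.
  rewrite (sum_hs_prob o Hs Hc Hlam) pivo; congr (_ / _).
  by apply: eq_bigr => y _; rewrite condo mul1r.
have HU : forall v, exists u : V -> R, (forall x, 0 <= u x <= 1) /\
    (v \in Br nbrs o r0 -> v != o ->
      [/\ u o = 0, u v = 1,
          (forall x, x != o -> x != v -> (gdist nbrs o x < L)%N ->
              u x <= \sum_(y <- nbrs x) hs_prob nbrs lam o x y * u y) &
          q <= \sum_(y <- nbrs o) hs_prob nbrs lam o o y * u y]).
  move=> v; case: (pselect ((v \in Br nbrs o r0) && (v != o))) => [/andP [vB vo]|nt].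
    have dvr : (gdist nbrs o v <= r0)%N by rewrite -memBr.
    have dvL : (gdist nbrs o v <= L)%N by apply: leq_trans dvr (leq_addl M r0).
    have [u [u0 u1 ub us ue]] := escape Hs Hc Hlam vo dvL.
    exists u; split => // _ _; split => //.
    rewrite sumPo.
    have eq : q = (lam - 1) / lam ^+ r0 / deg%:R by rewrite /q invfM; ring.
    rewrite eq; apply: ler_wpM2r; first by rewrite invr_ge0.
    apply: le_trans ue; apply: ler_wpM2l; first by rewrite subr_ge0 ltW.
    rewrite lef_pV2 ?posrE ?exprn_gt0 //.
    by rewrite (ler_eXn2l Hlam).
  exists (fun _ => 0); split; first by move=> x; rewrite lexx ler01.
  by move=> vB vo; exfalso; apply: nt; rewrite vB vo.
have [U HU'] := choice HU.
have HU1 : forall v x, 0 <= U v x <= 1 by move=> v; case: (HU' v).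
have HUt : forall v, v \in Br nbrs o r0 -> v != o -> _ := fun v => (HU' v).2.
have [v0 v0B v0o] : exists2 v, v \in Br nbrs o r0 & v != o.
  case: (pselect (exists2 v, v \in Br nbrs o r0 & v != o)) => // H; exfalso.
  have sub : {subset Br nbrs o r0 <= [:: o]}.
    move=> z zB; rewrite inE; apply/negPn/negP => zo; apply: H; exists z => //.
  have := uniq_leq_size (undup_uniq _) sub; rewrite /= => h.
  by move: (leq_trans HN h); rewrite leqNgt (leq_trans _ N4).
have q0 : 0 <= q.
  apply: divr_ge0; first by rewrite subr_ge0 ltW.
  by apply: mulr_ge0; [|apply: exprn_ge0; apply: ltW].
have q1 : q <= 1.
  have [_ _ _ hq] := HUt v0 v0B v0o.
  apply: le_trans hq _; apply: le_trans (sum_hs_prob_le1 o Hs Hc Hlam o).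
  apply: ler_sum => y _; rewrite -[X in _ <= X]mulr1.
  apply: ler_wpM2l; first exact: (hs_prob_ge0 o Hs Hc Hlam).
  by case/andP: (HU1 v0 y).
have Hb : 0 <= beta q.
  have [a0 a1] := andP (aa_bnd R).
  rewrite /beta subr_ge0; rewrite -[X in _ <= X](mulr1 1).
  exact: ler_pM.
have := main_final Hs Hc Hlam HU1 HUt Hb HN N0 kpos (leq_addr r0 M).
move=> h; apply: le_trans h _.
apply: final_ineq; [exact: aa_ge | exact: Hb | ].
have kpos' : (0 : R) < k%:R by rewrite ltr0n.
have lnl : 0 < ln lam := ln_gt0 Hlam.
set y := c * ln k%:R / ln lam.
have y0 : 0 <= y.
  apply: divr_ge0; last exact: ltW.
  by apply: mulr_ge0; [exact: ltW | apply: ln_ge0; rewrite ler1n].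
have r0y : r0%:R <= y by rewrite /r0 truncn_le.
set kc := k%:R `^ c.
have kc0 : 0 < kc by apply: powR_gt0.
have lr : lam ^+ r0 <= kc.
  rewrite -(powR_mulrn _ (ltW lam0)); apply: le_trans (ler_powR (ltW Hlam) r0y) _.
  suff -> : lam `^ y = kc by [].
  apply: ln_inj; rewrite ?posrE ?powR_gt0 //.
  by rewrite !ln_powR /y mulfVK // gt_eqF.
have e1 : k%:R `^ (1 - c) = k%:R / kc.
  rewrite powRD; last by rewrite pnatr_eq0 -lt0n kpos implybT.
  by rewrite powRr1 ?ler0n // powRN.
set X := (lam - 1) / deg%:R * k%:R `^ (1 - c).
have X0 : 0 <= X.
  by apply: mulr_ge0; [apply: divr_ge0; [rewrite subr_ge0 ltW|] | apply: powR_ge0].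
have t1 : ((Num.truncn X)%:R : R) <= X by rewrite truncn_le.
have hN : (N%:R : R) <= X.
  by apply: le_trans t1; rewrite ler_nat /N geq_minr.
apply: le_trans hN _; rewrite /X e1 /q.
have h1 : (lam - 1) / deg%:R * (k%:R / kc) <= (lam - 1) / deg%:R * (k%:R / lam ^+ r0).
  apply: ler_wpM2l; first by apply: divr_ge0; rewrite // subr_ge0 ltW.
  apply: ler_wpM2l; first exact: ltW.
  by rewrite lef_pV2 ?posrE ?exprn_gt0.
apply: le_trans h1 _; rewrite le_eqVlt; apply/orP; left; apply/eqP; rewrite invfM; ring.
Qed.
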